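(* For $0\le k\le n$, $$\alpha_{H_n^k}\cong \omega_{n,k}\big\uparrow^{S_n\times S_n}_{(S_k\times S_{n-k})\times(S_k\times S_{n-k})}.$$
   Context: Permutations are composed as functions, and $\pi\in S_n$ is identified with the permutation matrix whose $(i,j)$ entry is $1$ iff $i=\pi(j)$. $U_{n,k}$ is the $n\times n$ $(0,1)$-matrix whose upper left $k\times k$ block is upper triangular with all entries on and above the diagonal equal to $1$, whose upper right $k\times(n-k)$ block has all entries $1$, whose lower left block is zero and whose lower right block is $I_{n-k}$. $H_n^k=\{\pi U_{n,k}\sigma\mid\pi,\sigma\in S_n\}$, and $\alpha_{H_n^k}$ is the complex permutation representation of $S_n\times S_n$ on the space with basis $H_n^k$ given by $(\pi,\sigma)\bullet A=\pi A\sigma^{-1}$. $S_k\times S_{n-k}\le S_n$ is the subgroup of permutations preserving $\{1,\dots,k\}$ (and hence $\{k+1,\dots,n\}$). $W_n^k=\{\pi U_{n,k}\sigma\mid \pi,\sigma\in S_k\times S_{n-k}\}$ is the orbit of $U_{n,k}$ under the restricted action of $(S_k\times S_{n-k})\times(S_k\times S_{n-k})$, and $\omega_{n,k}$ is the corresponding permutation representation of $(S_k\times S_{n-k})\times(S_k\times S_{n-k})$ on the space with basis $W_n^k$. *)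

(* Defs.v *)
From mathcomp Require Import all_boot all_order all_algebra all_fingroup.
From mathcomp Require Import all_solvable all_field all_character.
Set Implicit Arguments. Unset Strict Implicit. Unset Printing Implicit Defensive.
Import GRing.Theory Num.Theory.
Local Open Scope ring_scope.


Section Defs.
Variable n k : nat.

Definition SS := ('S_n * 'S_n)%type.

Definition pmat (pi : 'S_n) : 'M[int]_n := \matrix_(i, j) ((i == pi j)%:R).

(* U_{n,k} (indices 0..n-1; the first k indices form the upper-left block). *)
Definition Unk : 'M[int]_n :=
  \matrix_(i, j) (if (i < k)%N then (if (j < k)%N then ((i <= j)%N)%:R else 1)
                  else ((i == j))%:R).

Definition act (x : SS) (A : 'M[int]_n) : 'M[int]_n :=
  (pmat x.1 *m A *m pmat (x.2)^-1%g)%R.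

(* S_k x S_{n-k} : permutations preserving {0,..,k-1} *)
Definition Ykn : {set 'S_n} :=
  [set s : 'S_n | s @: [set i : 'I_n | (i < k)%N] == [set i : 'I_n | (i < k)%N]].

Definition Hsub : {set SS} := setX Ykn Ykn.

Definition Hnk : seq 'M[int]_n := undup [seq act x Unk | x <- enum [set: SS]].

Definition Wnk : seq 'M[int]_n := undup [seq act x Unk | x <- enum Hsub].
End Defs.

(* Permutation representation on the basis B (row-vector convention, as in
   MathComp's mx_representation): e_i * rep x = e_j where B_j = x . B_i. *)
Definition perm_rep n (B : seq 'M[int]_n) (x : SS n) : 'M[algC]_(size B) :=
  \matrix_(i, j) ((nth 0%R B j == act x (nth 0%R B i))%:R).

Definition transv (gT : finGroupType) (H : {set gT}) : seq gT :=
  enum (transversal (rcosets H [set: gT]) [set: gT]).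

Definition ind_rep (gT : finGroupType) (H : {set gT}) d (r : gT -> 'M[algC]_d)
  (x : gT) :=
  let T := transv H in
  (\mxblock_(i < size T, j < size T)
     (let y := (nth 1%g T i * x * (nth 1%g T j)^-1)%g in
      if y \in H then r y else 0 : 'M[algC]_(d, d)))%R.

Definition rep_iso (gT : finGroupType) (G : {set gT}) n1 n2
  (r1 : gT -> 'M[algC]_n1) (r2 : gT -> 'M[algC]_n2) : Prop :=
  n1 = n2 /\ exists B : 'M[algC]_(n1, n2),
    row_free B /\ forall x, x \in G -> (r1 x *m B = B *m r2 x)%R.

(* Main.v *)
Require Import Defs.
From mathcomp Require Import all_boot all_order all_algebra all_fingroup.
From mathcomp Require Import all_solvable all_field all_character.
From mathcomp Require Import zify.
Set Implicit Arguments. Unset Strict Implicit. Unset Printing Implicit Defensive.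
Import GRing.Theory Num.Theory.
Local Open Scope ring_scope.
Section Gen.
Variables (gT : finGroupType) (T : eqType) (d : T) (a : T -> gT -> T).
Hypotheses (a1 : forall t, a t 1%g = t)
           (aM : forall t x y, a t (x * y)%g = a (a t x) y).
Variables (H : {group gT}) (u : T).
Hypothesis stab : forall g, a u g = u -> g \in H.

Lemma aK x t : a (a t x) x^-1%g = t.
Proof. by rewrite -aM mulgV a1. Qed.
Lemma a_inj x : injective (a^~ x).
Proof. by move=> s t /= e; rewrite -(aK x s) e aK. Qed.

Definition Ho := undup [seq a u x | x <- enum [set: gT]].
Definition Wo := undup [seq a u x | x <- enum H].
Definition prep (B : seq T) (x : gT) : 'M[algC]_(size B) :=
  \matrix_(i, j) ((nth d B j == a (nth d B i) x)%:R).

Lemma memHoP t : reflect (exists g, t = a u g) (t \in Ho).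
Proof.
rewrite mem_undup; apply: (iffP mapP) => [[g _ ->]|[g ->]]; first by exists g.
by exists g; rewrite // mem_enum inE.
Qed.
Lemma memWoP t : reflect (exists2 g, g \in H & t = a u g) (t \in Wo).
Proof.
rewrite mem_undup; apply: (iffP mapP) => [[g Hg ->]|[g Hg ->]].
  by exists g; rewrite // -mem_enum.
by exists g; rewrite // mem_enum.
Qed.
Lemma Ho_act t x : t \in Ho -> a t x \in Ho.
Proof. by case/memHoP=> g ->; apply/memHoP; exists (g * x)%g; rewrite aM. Qed.
Lemma Wo_act t x : t \in Wo -> x \in H -> a t x \in Wo.
Proof.
by case/memWoP=> g Hg -> Hx; apply/memWoP; exists (g * x)%g; rewrite ?groupM ?aM.
Qed.

Lemma nth_ord (s : seq T) x : x \in s -> exists i : 'I_(size s), nth d s i = x.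
Proof. move=> xs; have hi : (index x s < size s)%N by rewrite index_mem.
by exists (Ordinal hi); rewrite /= nth_index. Qed.

Lemma sum_nth (s : seq T) (F : 'I_(size s) -> algC) (i0 : 'I_(size s)) :
  uniq s -> \sum_(i < size s) (nth d s i == nth d s i0)%:R * F i = F i0.
Proof.
move=> us; rewrite (bigD1 i0) //= eqxx mul1r big1 ?addr0 // => i ne.
rewrite nth_uniq //; case: eqP => [/val_inj e|]; last by rewrite mul0r.
by rewrite e eqxx in ne.
Qed.

Lemma nth_eq_ord (s : seq T) (i j : 'I_(size s)) :
  uniq s -> (nth d s i == nth d s j) = (i == j).
Proof. by move=> us; rewrite nth_uniq. Qed.

Local Notation X := (transversal (rcosets H [set: gT]) [set: gT]).
Local Notation m := (size (transv H)).
Local Notation tt j := (nth 1%g (transv H) j).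

Lemma trX : is_transversal X (rcosets H [set: gT]) [set: gT].
Proof. exact: transversalP (rcosets_partition (subsetT H)). Qed.

Lemma tX (j : 'I_m) : tt j \in X.
Proof. by rewrite -mem_enum mem_nth. Qed.

Lemma X1 g : exists t, X :&: (H :* g)%g = [set t].
Proof.
have PB : (H :* g)%g \in rcosets H [set: gT] by apply/rcosetsP; exists g.
case/and3P: trX => _ _ /forall_inP/(_ _ PB) /cards1P[t e]; by exists t.
Qed.

Lemma tr_ex g : exists j : 'I_m, (g * (tt j)^-1)%g \in H.
Proof.
have [t e] := X1 g.
have : t \in X :&: (H :* g)%g by rewrite e set11.
case/setIP=> tX; rewrite mem_rcoset => tg.
have tT : t \in transv H by rewrite /transv mem_enum.
have hi : (index t (transv H) < size (transv H))%N by rewrite index_mem.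
exists (Ordinal hi); rewrite /= nth_index //.
by rewrite -groupV invMg invgK.
Qed.

Lemma tr_uniq (i j : 'I_m) : (tt i * (tt j)^-1)%g \in H -> i = j.
Proof.
move=> Hij; have [t e] := X1 (tt j).
have h1 : tt i \in X :&: (H :* tt j)%g by rewrite inE tX mem_rcoset.
have h2 : tt j \in X :&: (H :* tt j)%g by rewrite inE tX mem_rcoset mulgV group1.
move: h1 h2; rewrite e !inE => /eqP e1 /eqP e2.
apply/val_inj/eqP; rewrite -(nth_uniq 1%g (ltn_ord i) (ltn_ord j)) ?enum_uniq //.
by rewrite e1 e2.
Qed.

Local Notation W w := (nth d Wo w).
Local Notation Hh h := (nth d Ho h).

Lemma uWo : uniq Wo. Proof. exact: undup_uniq. Qed.
Lemma uHo : uniq Ho. Proof. exact: undup_uniq. Qed.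

Lemma decomp t : t \in Ho ->
  exists (j : 'I_m) (w : 'I_(size Wo)), t = a (W w) (tt j).
Proof.
case/memHoP=> g ->; have [j Hj] := tr_ex g.
have /nth_ord [w ew] : a u (g * (tt j)^-1)%g \in Wo by apply/memWoP; exists (g * (tt j)^-1)%g.
by exists j, w; rewrite ew -aM mulgKV.
Qed.

Lemma decomp_uniq (j j' : 'I_m) (w w' : 'I_(size Wo)) : a (W w) (tt j) = a (W w') (tt j') -> j = j' /\ w = w'.
Proof.
have /memWoP[g1 H1 e1] := mem_nth d (ltn_ord w).
have /memWoP[g2 H2 e2] := mem_nth d (ltn_ord w').
move=> e.
have ej : j = j'.
  apply: tr_uniq.
  have : (g1 * tt j * (g2 * tt j')^-1)%g \in H.
    by apply: stab; rewrite !aM -e1 e e2 -!aM mulgA mulgV a1.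
  move=> Hg; have -> : (tt j * (tt j')^-1 = g1^-1 * (g1 * tt j * (g2 * tt j')^-1) * g2)%g.
    by rewrite invMg !mulgA mulVg mul1g mulgKV.
  by rewrite groupM // groupM // groupV.
subst j'; split => //; apply/eqP.
by rewrite -(nth_eq_ord _ _ uWo) (a_inj e).
Qed.

Lemma Wo_Ho t : t \in Wo -> t \in Ho.
Proof. by case/memWoP=> g _ ->; apply/memHoP; exists g. Qed.
Lemma WtHo (w : 'I_(size Wo)) (j : 'I_m) : a (W w) (tt j) \in Ho.
Proof. by apply/Ho_act/Wo_Ho/mem_nth. Qed.

Definition Bj (j : 'I_m) : 'M[algC]_(size Ho, size Wo) :=
  \matrix_(h, w) ((Hh h == a (W w) (tt j))%:R).
Definition BB := \mxrow_j Bj j.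
Definition CC := \mxcol_j (Bj j)^T.

Lemma BC : BB *m CC = 1%:M.
Proof.
rewrite /BB /CC mul_mxrow_mxcol; apply/matrixP => h h'.
rewrite summxE !mxE.
have [j0 [w0 e0]] := decomp (mem_nth d (ltn_ord h)).
rewrite (bigD1 j0) //= big1 ?addr0.
  rewrite !mxE; under eq_bigr do rewrite !mxE.
  under eq_bigr do rewrite e0 (inj_eq (@a_inj _)) eq_sym.
  by rewrite (sum_nth (fun w => (Hh h' == a (W w) (tt j0))%:R) w0 uWo) -e0
     (nth_eq_ord _ _ uHo) eq_sym.
move=> j ne; rewrite !mxE big1 // => w _; rewrite !mxE e0.
case: eqP => [/decomp_uniq [ej _]|]; last by rewrite mul0r.
by rewrite ej eqxx in ne.
Qed.

Lemma CB : CC *m BB = 1%:M.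
Proof.
rewrite /BB /CC mul_mxcol_mxrow -(mxdiagZ 1) /mxdiag; apply: eq_mxblock => i j.
case: eqP => [<-|ne]; rewrite ?conform_mx_id; apply/matrixP => w w'; rewrite !mxE;
  under eq_bigr do rewrite !mxE;
  have [h0 e0] := nth_ord (WtHo w i); rewrite -e0;
  rewrite (sum_nth _ h0 uHo) e0.
  by rewrite (inj_eq (@a_inj _)) (nth_eq_ord _ _ uWo).
case: eqP => // /decomp_uniq [ej _]; by case: ne.
Qed.

Lemma eq_aV t s y : (t == a s y) = (s == a t y^-1%g).
Proof. by rewrite -(inj_eq (@a_inj y^-1%g)) aK eq_sym. Qed.
Lemma eq_aV' t s y : (a t y == s) = (t == a s y^-1%g).
Proof. by rewrite eq_sym eq_aV. Qed.

Theorem gen_iso : rep_iso [set: gT] (prep Ho) (ind_rep H (prep Wo)).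
Proof.
split.
  apply/anti_leq/andP; split.
    have := mxrankM_maxl BB CC; rewrite BC mxrank1 => /leq_trans; apply.
    exact: rank_leq_col.
  have := mxrankM_maxl CC BB; rewrite CB mxrank1 => /leq_trans; apply.
  exact: rank_leq_col.
exists BB; split; first by apply/row_freeP; exists CC; exact: BC.
move=> x _.
rewrite /BB /ind_rep mul_mxrow mul_mxrow_mxblock; apply: eq_mxrow => l.
have [j0 Hj0] := tr_ex (tt l * x^-1)%g.
have Hy0 : (tt j0 * x * (tt l)^-1)%g \in H by rewrite -groupV !invMg invgK mulgA.
rewrite (bigD1 j0) //= Hy0 big1 ?addr0; last first.
  move=> j ne; case: ifP => Hy; last by rewrite mulmx0.
  exfalso; move/eqP: ne; apply; apply: tr_uniq.
  have -> : (tt j * (tt j0)^-1 = (tt j * x * (tt l)^-1) * (tt j0 * x * (tt l)^-1)^-1)%g.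
    by rewrite !invMg invgK !mulgA mulgKV mulgK.
  by rewrite groupM ?groupV.
apply/matrixP => h w; rewrite !mxE.
under eq_bigr do rewrite !mxE.
have [h1 e1] := nth_ord (Ho_act x (mem_nth d (ltn_ord h))).
rewrite -e1 (sum_nth _ h1 uHo) e1.
have [w1 ew1] := nth_ord (Wo_act (mem_nth d (ltn_ord w)) (groupVr Hy0)).
under eq_bigr do rewrite !mxE.
under eq_bigr do rewrite (eq_aV (W w)) -ew1 mulrC.
rewrite (sum_nth _ w1 uWo) ew1 -aM eq_aV' -aM.
by rewrite !invMg invgK !mulgA mulgKV.
Qed.

End Gen.
Section Spec.
Variables n k : nat.

Lemma pmatM (s t : 'S_n) : pmat (s * t)%g = pmat t *m pmat s.
Proof.
apply/matrixP => i j; rewrite !mxE permM (bigD1 (s j)) //= !mxE eqxx mulr1.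
rewrite big1 ?addr0 // => l ne; rewrite !mxE (negbTE ne) mulr0 //.
Qed.

Lemma pmat1 : pmat (1%g : 'S_n) = 1%:M.
Proof. by apply/matrixP => i j; rewrite !mxE perm1. Qed.

Lemma act1 A : Defs.act (1%g : SS n) A = A.
Proof. by rewrite /Defs.act /= invg1 pmat1 mul1mx mulmx1. Qed.

Lemma actM A (x y : SS n) : Defs.act (x * y)%g A = Defs.act y (Defs.act x A).
Proof.
case: x y => [x1 x2] [y1 y2]; rewrite /Defs.act /= invMg !pmatM !mulmxA.
by [].
Qed.

Lemma pmat_mulE (p : 'S_n) (A : 'M[int]_n) i j : (pmat p *m A) i j = A (p^-1%g i) j.
Proof.
rewrite !mxE (bigD1 (p^-1%g i)) //= !mxE permKV eqxx mul1r big1 ?addr0 // => l ne.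
rewrite !mxE; case: eqP => [e|]; last by rewrite mul0r.
by rewrite e permK eqxx in ne.
Qed.

Lemma mul_pmatE (q : 'S_n) (A : 'M[int]_n) i j : (A *m pmat q) i j = A i (q j).
Proof.
rewrite !mxE (bigD1 (q j)) //= !mxE eqxx mulr1 big1 ?addr0 // => l ne.
by rewrite !mxE (negbTE ne) mulr0.
Qed.

Definition ub (i j : 'I_n) : bool :=
  if (i < k)%N then (k <= j)%N || (i <= j)%N else i == j.

Lemma UnkE i j : Unk n k i j = (ub i j)%:R.
Proof. rewrite /Unk /ub !mxE; case: ltnP => //; case: ltnP => //= ? ?; by case: leqP. Qed.

Lemma stab_main (p q : 'S_n) : (forall i j, ub (p i) (q j) = ub i j) ->
  (forall i : 'I_n, (p i < k)%N = (i < k)%N) /\ (forall j : 'I_n, (j < k)%N -> (q j < k)%N).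
Proof.
move=> hU.
have R : forall i : 'I_n, (p i < k)%N = (i < k)%N.
  move=> i; case: (ltnP k n) => kn; last first.
    by rewrite (leq_trans (ltn_ord i) kn) (leq_trans (ltn_ord (p i)) kn).
  have zl : (n.-1 < n)%N by lia.
  pose z := Ordinal zl.
  have kz : (k <= z)%N by rewrite /=; lia.
  case: (ltnP i k) => ik; case: (ltnP (p i) k) => pik //.
    have h1 := hU i i; have h2 := hU i z.
    rewrite /ub ik leqnn orbT (leq_gtF pik) in h1.
    rewrite /ub ik kz (leq_gtF pik) in h2.
    move/eqP: h1 => h1; move/eqP: h2 => h2.
    have : q i = q z by rewrite -h1 -h2.
    move/perm_inj => e; move: ik; rewrite e; lia.
  have h1 := hU i (q^-1%g (p i)); have h2 := hU i (q^-1%g z).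
  rewrite permKV /ub pik leqnn orbT (leq_gtF ik) in h1.
  rewrite permKV /ub pik kz (leq_gtF ik) in h2.
  move/esym/eqP: h1 => h1; move/esym/eqP: h2 => h2.
  have : p i = z by rewrite -(permKV q (p i)) -h1 h2 permKV.
  move=> e; move: pik; rewrite e /=; lia.
split => // j jk; case: (ltnP (q j) k) => // qj.
have h := hU (p^-1%g (q j)) j.
rewrite permKV /ub (leq_gtF qj) eqxx in h.
have ik : (k <= p^-1%g (q j))%N by rewrite leqNgt -R permKV -leqNgt.
move: h; rewrite (leq_gtF ik) => /esym/eqP e.
by move: ik; rewrite e leqNgt jk.
Qed.

Lemma Ykn_suff (s : 'S_n) : (forall i : 'I_n, (i < k)%N -> (s i < k)%N) -> s \in Ykn n k.
Proof.
move=> hs; rewrite inE eqEcard card_imset; last exact: perm_inj.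
rewrite leqnn andbT; apply/subsetP => _ /imsetP[i Hi ->].
by move: Hi; rewrite !inE => /hs.
Qed.

Lemma Ykn_nec (s : 'S_n) (i : 'I_n) : s \in Ykn n k -> (i < k)%N -> (s i < k)%N.
Proof.
rewrite inE => /eqP e ik.
have : s i \in s @: [set i : 'I_n | (i < k)%N] by apply: imset_f; rewrite inE.
by rewrite e inE.
Qed.

Lemma Hsub_group : group_set (Hsub n k).
Proof.
apply/group_setP; split.
  by rewrite inE /=; apply/andP; split; apply: Ykn_suff => i; rewrite perm1.
move=> [x1 x2] [y1 y2]; rewrite /Hsub !in_setX /= => /andP[h1 h2] /andP[h3 h4].
by apply/andP; split; apply: Ykn_suff => i ik; rewrite permM; do 2 apply: Ykn_nec => //.
Qed.

Lemma stabU (g : SS n) : Defs.act g (Unk n k) = Unk n k -> g \in Hsub n k.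
Proof.
case: g => [p q] /= e.
have hU : forall i j, ub (p i) (q j) = ub i j.
  move=> i j; have := congr1 (fun M : 'M[int]_n => M (p i) (q j)) e.
  rewrite /Defs.act /= mul_pmatE pmat_mulE !permK !UnkE.
  by case: (ub i j); case: (ub _ _).
have [R Q] := stab_main hU.
by rewrite inE /=; apply/andP; split; apply: Ykn_suff => // i ik; rewrite R.
Qed.

End Spec.

Local Close Scope ring_scope.

Theorem mainTheorem12 (n k : nat) (hk : (k <= n)%N) :
  rep_iso [set: SS n]
    (perm_rep (Hnk n k))
    (ind_rep (Hsub n k) (perm_rep (Wnk n k))).
Proof.
have hg := Hsub_group n k.
exact: (@gen_iso (SS n) _ 0%R (fun A x => Defs.act x A) (@act1 n) (@actM n)
          (Group hg) (Unk n k) (@stabU n k)).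
Qed.
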